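(* Let $M\ge1$, $N\ge0$, let $\{m\}=(m_0,\dots,m_{M-1})$ with $\sum m_k=N+1$ and $\{n\}=(n_0,\dots,n_{M-1})$ with $\sum n_k=N$ be tuples of nonnegative integers with associated partitions $\mu$ ($N+1$ parts) and $\lambda$ ($N$ parts). For nonzero $v\in\mathbb{C}$ with $v^{-2}\neq\beta$, put $z=(v^{-2}-\beta)^{-1}$. Then $$\langle\{m\}|(v^{-1}-\beta v)^{1-M}\mathcal{B}(v)|\{n\}\rangle=G_{\mu/\lambda}(z;\beta),\qquad \langle\{n\}|(v^{-1}-\beta v)^{1-M}\mathcal{C}(v)|\{m\}\rangle=G_{\mu^\vee/\lambda^\vee}(z;\beta),$$ where $\lambda^\vee_j=M-1-\lambda_{N+1-j}$ ($1\le j\le N$) and $\mu^\vee_j=M-1-\mu_{N+2-j}$ ($1\le j\le N+1$).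
   Context: Non-Hermitian phase model: $\beta\in\mathbb{C}$ is a parameter. $\mathcal{F}$ is the bosonic Fock space with orthonormal basis $|n\rangle$, $n=0,1,2,\dots$; $\phi|n\rangle=|n-1\rangle$ ($\phi|0\rangle=0$), $\phi^\dagger|n\rangle=|n+1\rangle$, $\pi|n\rangle=\delta_{n,0}|n\rangle$. Sites are labelled $0,\dots,M-1$ with Fock spaces $\mathcal{F}_0,\dots,\mathcal{F}_{M-1}$; $\phi_j,\phi_j^\dagger,\pi_j$ act on $\mathcal{F}_j$. With $W_a=\mathbb{C}^2$, basis $|0\rangle_a,|1\rangle_a$, the $L$-operator on $W_a\otimes\mathcal{F}_j$ is $$\mathcal{L}_{aj}(v)=|0\rangle\langle0|_a\otimes(v^{-1}-\beta v\pi_j)+|0\rangle\langle1|_a\otimes\phi_j^\dagger+|1\rangle\langle0|_a\otimes\phi_j+|1\rangle\langle1|_a\otimes v,$$ i.e. the $2\times2$ matrix $\begin{pmatrix}v^{-1}-\beta v\pi_j&\phi_j^\dagger\\ \phi_j&v\end{pmatrix}$. The monodromy matrix is $\mathcal{T}_a(v)=\mathcal{L}_{a,M-1}(v)\cdots\mathcal{L}_{a,0}(v)=\begin{pmatrix}\mathcal{A}(v)&\mathcal{B}(v)\\ \mathcal{C}(v)&\mathcal{D}(v)\end{pmatrix}$, so $\mathcal{B}(v)={}_a\langle0|\mathcal{T}_a(v)|1\rangle_a$, $\mathcal{C}(v)={}_a\langle1|\mathcal{T}_a(v)|0\rangle_a$. For $\{n\}=(n_0,\dots,n_{M-1})$,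 $|\{n\}\rangle=\otimes_{j=0}^{M-1}|n_j\rangle_j$ and $\langle\{n\}|$ its dual. The partition associated with $\{n\}$ (with $\sum n_k=N$) is the weakly decreasing length-$N$ sequence $\lambda=((M-1)^{n_{M-1}},\dots,1^{n_1},0^{n_0})$. For $\mu$ with $N+1$ entries and $\lambda$ with $N$ entries, $|\lambda|=\sum\lambda_j$ and $G_{\mu/\lambda}(z;\beta)=z^{|\mu|-|\lambda|}\prod_{j=1}^N(1+\beta z-\beta z\,\delta_{\mu_{j+1},\lambda_j})$ if $\mu_j\ge\lambda_j\ge\mu_{j+1}$ for all $1\le j\le N$, and $0$ otherwise. *)

(* Defs.v *)
(* The parameter field C stands for the complex numbers
   (any numClosedFieldType, e.g. algC). *)
From HB Require Import structures.
From mathcomp Require Import all_boot all_order all_algebra.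
Set Implicit Arguments. Unset Strict Implicit. Unset Printing Implicit Defensive.
Import Order.TTheory GRing.Theory Num.Theory.
Local Open Scope ring_scope.

(* Matrix element  <k| L_{ab}(v) |l>  of the L-operator on one site, as a
   2x2 matrix in the auxiliary index (a,b) in {0,1}:
     L_00 = v^{-1} - beta v pi,  L_01 = phi^dag,  L_10 = phi,  L_11 = v. *)
Definition Lmat (C : fieldType) (beta v : C) (k l : nat) : 'M[C]_2 :=
  \matrix_(a < 2, b < 2)
    match val a, val b with
    | 0%N, 0%N => (v^-1 - beta * v * (l == 0%N)%:R) * (k == l)%:R
    | 0%N, _ => (k == l.+1)%:R               (* phi^dag |l> = |l+1> *)
    | _, 0%N => (k.+1 == l)%:R               (* phi |l> = |l-1>, phi|0> = 0 *)
    | _, _ => v * (k == l)%:R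
    end.

(* <{k}| T_a(v) |{l}> as a 2x2 matrix in the auxiliary space, where
   T_a(v) = L_{a,M-1}(v) ... L_{a,0}(v); since L_{aj} acts on site j only,
   the Fock matrix element factorises site by site. *)
Definition monodromy (C : fieldType) (M : nat) (beta v : C)
  (k l : 'I_M -> nat) : 'M[C]_2 :=
  \prod_(i < M) Lmat beta v (k (rev_ord i)) (l (rev_ord i)).

(* <{m}| B(v) |{n}> = <0|_a T |1>_a  and  <{n}| C(v) |{m}> = <1|_a T |0>_a *)
Definition Bel (C : fieldType) (M : nat) (beta v : C) (m n : 'I_M -> nat) : C :=
  monodromy beta v m n 0 1.
Definition Cel (C : fieldType) (M : nat) (beta v : C) (n m : 'I_M -> nat) : C :=
  monodromy beta v n m 1 0.

Definition partition_of (M : nat) (n : 'I_M -> nat) : seq nat :=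
  flatten [seq nseq (n i) (val i) | i <- rev (enum 'I_M)].

Definition dual_part (M : nat) (s : seq nat) : seq nat :=
  [seq (M - 1 - x)%N | x <- rev s].

(* G_{mu/lambda}(z;beta), with 0-based indices: mu_j = nth 0 mu j, j < N = size la. *)
Definition G_skew (C : fieldType) (mu la : seq nat) (z beta : C) : C :=
  if [forall j : 'I_(size la),
        (nth 0 mu j >= nth 0 la j)%N && (nth 0 la j >= nth 0 mu j.+1)%N]
  then z ^+ (sumn mu - sumn la) *
       \prod_(j < size la)
          (1 + beta * z - beta * z * (nth 0 mu j.+1 == nth 0 la j)%:R)
  else 0.

(* Main.v *)
Require Import Defs.
From HB Require Import structures.
From mathcomp Require Import all_boot all_order all_algebra.
From mathcomp Require Import zify ring.
Import Order.TTheory GRing.Theory Num.Theory.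
Local Open Scope ring_scope.


Section PS.
Variables (C : fieldType) (beta z : C).

Fixpoint Pf (mu la : seq nat) : C :=
  match la with
  | [::] => 1
  | y :: la' => ((nth 0 mu 0 >= y)%N && (y >= nth 0 mu 1)%N)%:R *
        (1 + beta * z - beta * z * (nth 0 mu 1 == y)%:R) * Pf (behead mu) la'
  end.

Lemma forall_ordS n (Q : 'I_n.+1 -> bool) :
  [forall j, Q j] = Q ord0 && [forall j : 'I_n, Q (lift ord0 j)].
Proof.
apply/forallP/andP => [H|[H0 /forallP H] j]; first by split; [apply H| apply/forallP => j; apply H].
by case: (unliftP ord0 j) => [j'|] ->.
Qed.

Lemma Pforall mu la : Pf mu la =
  if [forall j : 'I_(size la),
        (nth 0 mu j >= nth 0 la j)%N && (nth 0 la j >= nth 0 mu j.+1)%N]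
  then \prod_(j < size la)
          (1 + beta * z - beta * z * (nth 0 mu j.+1 == nth 0 la j)%:R)
  else 0.
Proof.
elim: la mu => [|y la IH] mu /=.
  by rewrite big_ord0; case: ifP => // /negbT/forallPn[[]].
rewrite forall_ordS big_ord_recl /=.
have E j : bump 0 j = j.+1 by rewrite /bump add1n.
under eq_forallb => j do rewrite E add0n -[nth 0 mu j.+1]nth_behead -[nth 0 mu j.+2]nth_behead.
under eq_bigr => j _ do rewrite E add0n -[nth 0 mu j.+2]nth_behead.
rewrite IH.
case: ((nth 0 mu 0 >= y)%N && (y >= nth 0 mu 1)%N); last by rewrite !mul0r.
by case: ifP => _; rewrite ?mul1r ?mulr0.
Qed.

Lemma G_P mu la : G_skew mu la z beta = z ^+ (sumn mu - sumn la) * Pf mu la.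
Proof. by rewrite /G_skew Pforall; case: ifP => _; rewrite ?mulr0. Qed.

Lemma Psum mu la : Pf mu la != 0 -> (sumn la <= sumn mu)%N.
Proof.
elim: la mu => [|y la IH] mu //=.
case: ((nth 0 mu 0 >= y)%N && _) /andP => [[H1 _]|]; last by rewrite !mul0r eqxx.
rewrite mul1r mulf_eq0 negb_or => /andP[_ /IH].
case: mu H1 => [|x mu] /= H1 H2; lia.
Qed.

Definition w (e : bool) := 1 + beta * z - beta * z * e%:R.

Lemma w1 : w true = 1. Proof. by rewrite /w mulr1 addrK. Qed.
Lemma w0 : w false = 1 + beta * z. Proof. by rewrite /w mulr0 subr0. Qed.

Lemma Pcons x mu y la : Pf (x :: mu) (y :: la) =
  ((y <= x)%N && (nth 0 mu 0 <= y)%N)%:R * w (nth 0 mu 0 == y) * Pf mu la.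
Proof. by []. Qed.

Lemma catnS n (t : nat) X : nseq n.+1 t ++ X = t :: (nseq n t ++ X). Proof. by []. Qed.

Lemma nth0c (x : nat) s : nth 0 (x :: s) 0 = x. Proof. by []. Qed.

Lemma Pblock q t X Y : (nth 0 X 0 < t)%N ->
  Pf (t :: nseq q t ++ X) (t :: nseq q t ++ Y) = (1 + beta * z) * Pf X Y.
Proof.
move=> H; elim: q => [|q IH].
  by rewrite ?catnS Pcons !cat0s leqnn (ltnW H) (ltn_eqF H) w0 mul1r.
by rewrite ?catnS Pcons nth0c leqnn eqxx w1 !mul1r IH.
Qed.

Lemma PB q t X Y : Pf (t :: nseq q t ++ X) (nseq q t ++ Y) = Pf (t :: X) Y.
Proof.
elim: q => [|q IH] //.
by rewrite [nseq q.+1 t ++ Y]catnS Pcons nth0c leqnn eqxx w1 !mul1r IH.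
Qed.

Lemma PC q t X Y : (nth 0 Y 0 <= t)%N ->
  Pf (t.+1 :: nseq q t ++ X) (nseq q t ++ Y) = Pf (t :: X) Y.
Proof.
case: q => [|q] H.
  case: Y H => [|y Y] //= H.
  by rewrite H (leqW H).
by rewrite ?catnS Pcons nth0c leqnn leqnSn eqxx w1 !mul1r PB.
Qed.

Lemma PD p t X Y : (nth 0 X 0 < t)%N ->
  Pf (t.+1 :: nseq p t ++ X) (nseq p.+1 t ++ Y) = (1 + beta * z) * Pf X Y.
Proof.
case: p => [|p] H.
  by rewrite ?catnS Pcons !cat0s leqnSn (ltnW H) (ltn_eqF H) w0 mul1r.
by rewrite ?catnS Pcons nth0c leqnSn leqnn eqxx w1 !mul1r Pblock.
Qed.

Lemma Pzero1 p q t X Y : (p < q)%N -> (nth 0 X 0 < t)%N ->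
  Pf (nseq p t ++ X) (nseq q t ++ Y) = 0.
Proof.
elim: p q => [|p IH] [|q] // Hpq H.
  by rewrite cat0s; case: X H => [|x X] /= H; rewrite leqNgt H /= !mul0r.
by rewrite ?catnS Pcons IH // mulr0.
Qed.

Lemma Pzero2 p q t X Y : (q.+1 < p)%N -> (0 < size Y)%N -> (nth 0 Y 0 < t)%N ->
  Pf (nseq p t ++ X) (nseq q t ++ Y) = 0.
Proof.
elim: q p => [|q IH] [|[|p]] // Hpq.
  case: Y => [|y Y] //= _ H.
  by rewrite [(t <= y)%N]leqNgt H andbF !mul0r.
by move=> H1 H2; rewrite ?catnS Pcons (IH p.+1) // mulr0.
Qed.

Lemma Pzero3 p q t X Y : (q < p)%N -> (0 < size Y)%N -> (nth 0 Y 0 < t)%N ->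
  Pf (t.+1 :: nseq p t ++ X) (nseq q t ++ Y) = 0.
Proof.
case: q => [|q]; case: p => [|p] // Hpq.
  case: Y => [|y Y] //= _ H.
  by rewrite [(t <= y)%N]leqNgt H andbF !mul0r.
by move=> H1 H2; rewrite ?catnS Pcons (Pzero2 p.+1 q t X Y) // mulr0.
Qed.

Lemma Pzero4 p q t X Y : (p.+1 < q)%N -> (nth 0 X 0 < t)%N ->
  Pf (t.+1 :: nseq p t ++ X) (nseq q t ++ Y) = 0.
Proof.
case: q => [|q] // Hpq H.
by rewrite ?catnS Pcons Pzero1 // mulr0.
Qed.

End PS.


Section T.
Variables (C : fieldType) (beta v : C).

Definition cc := v^-1 - beta * v.
Definition zz := (v ^- 2 - beta)^-1.

Lemma algfacts : v != 0 -> v ^- 2 != beta ->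
  [/\ cc != 0, zz != 0, v^-1 = cc * (1 + beta * zz), v = cc * zz &
      cc * cc * zz * (1 + beta * zz) = 1].
Proof.
move=> hv hb.
have hd : v ^- 2 - beta != 0 by rewrite subr_eq0.
have h2 : 1 + - beta * v ^+ 2 != 0.
  have -> : 1 + - beta * v ^+ 2 = (v ^- 2 - beta) * v ^+ 2.
    by rewrite mulrBl mulVf ?expf_neq0 // mulNr.
  by rewrite mulf_neq0 // expf_neq0.
have e1 : v^-1 = cc * (1 + beta * zz).
  rewrite /cc /zz; field; by rewrite hv h2.
have e2 : v = cc * zz.
  rewrite /cc /zz; field; by rewrite hv h2.
have hc : cc != 0.
  by apply/eqP => h; move: hv; rewrite e2 h mul0r eqxx.
split => //; first by rewrite /zz invr_eq0.
rewrite (_ : cc * cc * zz * (1 + beta * zz) = (cc * zz) * (cc * (1 + beta * zz))); last by ring.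
by rewrite -e1 -e2 mulfV.
Qed.

Lemma monoS M (k l : 'I_M.+1 -> nat) :
  monodromy beta v k l = Lmat beta v (k ord_max) (l ord_max) *
    monodromy beta v (fun j => k (widen_ord (leqnSn M) j))
                     (fun j => l (widen_ord (leqnSn M) j)).
Proof.
rewrite /monodromy big_ord_recl.
have -> : rev_ord (ord0 : 'I_M.+1) = ord_max by apply/val_inj => /=; lia.
congr (_ * _); apply: eq_bigr => i _.
have -> // : rev_ord (lift ord0 i) = widen_ord (leqnSn M) (rev_ord i).
by apply/val_inj => /=; rewrite /bump /=; lia.
Qed.

Lemma entry2 (A B : 'M[C]_2) i j :
  (A * B) i j = A i ord0 * B ord0 j + A i ord_max * B ord_max j.
Proof.
rewrite -mulmxE mxE big_ord_recr big_ord_recl big_ord0 /= addr0.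
by have -> : widen_ord (leqnSn 1) ord0 = ord0 :> 'I_2 by apply/val_inj.
Qed.

Lemma L00 k l : Lmat beta v k l ord0 ord0 = (v^-1 - beta * v * (l == 0)%N%:R) * (k == l)%:R.
Proof. by rewrite mxE. Qed.
Lemma L01 k l : Lmat beta v k l ord0 ord_max = (k == l.+1)%:R.
Proof. by rewrite mxE. Qed.
Lemma L10 k l : Lmat beta v k l ord_max ord0 = (k.+1 == l)%:R.
Proof. by rewrite mxE. Qed.
Lemma L11 k l : Lmat beta v k l ord_max ord_max = v * (k == l)%:R.
Proof. by rewrite mxE. Qed.

End T.

Lemma partS M (k : 'I_M.+1 -> nat) : partition_of k =
  nseq (k ord_max) M ++ partition_of (fun j => k (widen_ord (leqnSn M) j)).
Proof.
rewrite /partition_of enum_ordSr rev_rcons /=; congr (_ ++ _).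
by rewrite -[rev (map _ _)]map_rev -map_comp.
Qed.

Lemma part_ext M (k1 k2 : 'I_M -> nat) : (forall i, k1 i = k2 i) ->
  partition_of k1 = partition_of k2.
Proof. by move=> H; rewrite /partition_of; congr flatten; apply: eq_map => i; rewrite H. Qed.

Lemma part_size M (k : 'I_M -> nat) : size (partition_of k) = (\sum_i k i)%N.
Proof.
elim: M k => [|M IH] k.
  by rewrite big_ord0 /partition_of; case: (enum 'I_0) (size_enum_ord 0) => //.
by rewrite partS size_cat size_nseq IH big_ord_recr /= addnC.
Qed.

Lemma part_bound M (k : 'I_M -> nat) x : x \in partition_of k -> (x < M)%N.
Proof.
elim: M k => [|M IH] k.
  by rewrite /partition_of; case: (enum 'I_0) (size_enum_ord 0) => //.
rewrite partS mem_cat mem_nseq => /orP[/andP[_ /eqP->] //|/IH]; lia.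
Qed.

Lemma part0 (k : 'I_0 -> nat) : partition_of k = [::].
Proof. by apply/nilP; rewrite /nilp part_size big_ord0. Qed.



Arguments cc {C}. Arguments zz {C}. Arguments Pf {C}. Arguments algfacts {C beta v}.
Arguments monoS {C} beta v {M}. Arguments entry2 {C}.
Arguments L00 {C}. Arguments L01 {C}. Arguments L10 {C}. Arguments L11 {C}.

Definition idx (b : bool) : 'I_2 := if b then ord_max else ord0.

Lemma zq_add (C : fieldType) (z : C) n A B : z != 0 ->
  z ^+ (n + A) / z ^+ (n + B) = z ^+ A / z ^+ B.
Proof.
move=> hz; rewrite !exprD invfM mulrACA divff ?mul1r //; exact: expf_neq0.
Qed.

Lemma zq_addS (C : fieldType) (z : C) n A B : z != 0 ->
  z ^+ (n + A.+1) / z ^+ (n + B) = z * (z ^+ A / z ^+ B).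
Proof. by move=> hz; rewrite zq_add // exprS mulrA. Qed.

Lemma helpA (C : comRingType) (c z b X Y : C) n : c * c * z * (1 + b * z) = 1 ->
  c ^+ n * X * Y = c ^+ n.+2 * (z * X) * ((1 + b * z) * Y).
Proof.
move=> h; transitivity (c ^+ n * X * Y * (c * c * z * (1 + b * z))); first by rewrite h mulr1.
by rewrite !exprS; ring.
Qed.

Lemma genT (C : fieldType) (beta v : C) : v != 0 -> v ^- 2 != beta ->
  forall M (k l : 'I_M -> nat) (b : bool),
  cc beta v * monodromy beta v k l (idx b) ord_max =
  if (1 + \sum_i l i == b + \sum_i k i)%N then
    cc beta v ^+ (M + b) *
    (zz beta v ^+ sumn (if b then M :: partition_of k else partition_of k)
       / zz beta v ^+ sumn (partition_of l)) *
    Pf beta (zz beta v) (if b then M :: partition_of k else partition_of k) (partition_of l)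
  else 0.
Proof.
move=> hv hb; have [hc hz e1 e2 e3] := algfacts hv hb.
set c := cc beta v in hc e1 e2 e3 *; set z := zz beta v in hz e1 e2 e3 *.
elim=> [|M IH] k l b.
  rewrite /monodromy !big_ord0 !part0 mxE /=.
  by case: b => /=; rewrite ?mulr0 // !mulr1 ?add0n ?addn0 expr0 divr1 expr1 mulr1.
rewrite (monoS beta v k l) entry2 !big_ord_recr /= !partS.
set p := k ord_max; set q := l ord_max.
set k' := (fun j => k (widen_ord (leqnSn M) j)).
set l' := (fun j => l (widen_ord (leqnSn M) j)).
have IH0 := IH k' l' false; have IH1 := IH k' l' true; rewrite /= in IH0 IH1.
set T0 := monodromy _ _ _ _ _ _ in IH0 *; set T1 := monodromy _ _ _ _ _ _ in IH1 *.
set Sl := (\sum_(i < M) l' i)%N in IH0 IH1 *.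
set Sk := (\sum_(i < M) k' i)%N in IH0 IH1 *.
set mu := partition_of k' in IH0 IH1 *.
set la := partition_of l' in IH0 IH1 *.
have smu : size mu = Sk by rewrite part_size.
have sla : size la = Sl by rewrite part_size.
have bmu : forall x, x \in mu -> (x < M)%N by move=> x; apply: part_bound.
have bla : forall x, x \in la -> (x < M)%N by move=> x; apply: part_bound.
rewrite (_ : c * (Lmat beta v p q (idx b) ord0 * T0 + Lmat beta v p q (idx b) ord_max * T1)
  = Lmat beta v p q (idx b) ord0 * (c * T0) + Lmat beta v p q (idx b) ord_max * (c * T1)); last by ring.
rewrite IH0 IH1.
have hmu0 : (0 < Sk)%N -> (nth 0 mu 0 < M)%N by move=> h; apply/bmu/mem_nth; rewrite smu.
have hla0 : (0 < Sl)%N -> (nth 0 la 0 < M)%N by move=> h; apply/bla/mem_nth; rewrite sla.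
have hla1 : (nth 0 la 0 <= M)%N.
  by case: (ltnP 0 Sl) => h; [apply/ltnW/hla0 | rewrite nth_default // sla].
have ec : v^-1 - beta * v = c by [].
rewrite !sumn_cat !sumn_nseq.
have nF : (false%:R : C) = 0 by [].
have nT : (true%:R : C) = 1 by [].
case: b => /=; rewrite ?L00 ?L01 ?L10 ?L11 !sumn_cat !sumn_nseq.
- have [epq|npq] := eqVneq p q.
    rewrite -epq (_ : (p.+1 == p) = false); last by apply/negbTE/eqP; lia.
    rewrite ?eqxx ?nF ?nT ?(mul0r, mulr0, add0r, addr0, mulr1, mul1r).
    have -> : ((1 + (Sl + p)) == (1 + (Sk + p)))%N = ((1 + Sl) == (1 + Sk))%N by apply/eqP/eqP; lia.
    case: ifP => Hc; last by rewrite mulr0.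
    rewrite PC; last exact: hla1.
    rewrite (_ : (M.+1 + (M * p + sumn mu) = M * p + (M + sumn mu).+1)%N); last by lia.
    rewrite zq_addS // (_ : (M.+1 + 1 = (M + 1).+1)%N) // exprS e2; ring.
  have [epq2|npq2] := eqVneq p.+1 q.
    rewrite -epq2.
    rewrite ?eqxx ?nF ?nT ?(mul0r, mulr0, add0r, addr0, mulr1, mul1r).
    have -> : ((1 + (Sl + p.+1)) == (1 + (Sk + p)))%N = ((1 + Sl) == (0 + Sk))%N by apply/eqP/eqP; lia.
    case: ifP => Hc; last by [].
    rewrite PD; last by apply: hmu0; lia.
    rewrite (_ : (M.+1 + (M * p + sumn mu) = (M * p + M) + (sumn mu).+1)%N); last by lia.
    rewrite (_ : (M * p.+1 + sumn la = (M * p + M) + sumn la)%N); last by rewrite mulnS; lia.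
    rewrite zq_addS // addn0 (_ : (M.+1 + 1 = M.+2)%N); last by rewrite addn1.
    exact: helpA.
  rewrite ?nF ?(mul0r, mulr0, add0r, addr0).
  case: ifP => Hc //; move/eqP: Hc => Hc.
  have [hlt|hgt] : (q < p)%N \/ (p.+1 < q)%N.
    by move/eqP: npq; move/eqP: npq2; lia.
    by rewrite Pzero3 ?mulr0 // ?sla //; [lia | apply: hla0; lia].
  by rewrite Pzero4 ?mulr0 //; apply: hmu0; lia.
- have [epq|npq] := eqVneq p q.
    rewrite -epq (_ : (p == p.+1) = false); last by apply/negbTE/eqP; lia.
    rewrite ?eqxx ?nF ?nT ?(mul0r, mulr0, add0r, addr0, mulr1, mul1r).
    have -> : ((1 + (Sl + p)) == (0 + (Sk + p)))%N = ((1 + Sl) == (0 + Sk))%N by apply/eqP/eqP; lia.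
    case: ifP => Hc; last by rewrite mulr0.
    rewrite zq_add // !addn0.
    case: p epq => [|p] epq.
      by rewrite eqxx mulr1 ec !cat0s exprS; ring.
    rewrite Pblock; last by apply: hmu0; lia.
    rewrite mulr0 subr0 e1 exprS; ring.
  have [epq2|npq2] := eqVneq p q.+1.
    rewrite epq2.
    rewrite ?eqxx ?nF ?nT ?(mul0r, mulr0, add0r, addr0, mulr1, mul1r).
    have -> : ((1 + (Sl + q)) == (0 + (Sk + q.+1)))%N = ((1 + Sl) == (1 + Sk))%N by apply/eqP/eqP; lia.
    case: ifP => Hc; last by [].
    rewrite PB.
    rewrite (_ : (M * q.+1 + sumn mu = M * q + (M + sumn mu))%N); last by rewrite mulnS; lia.
    by rewrite zq_add // addn0 addn1.
  rewrite ?nF ?(mul0r, mulr0, add0r, addr0).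
  case: ifP => Hc //; move/eqP: Hc => Hc.
  have [hlt|hgt] : (p < q)%N \/ (q.+1 < p)%N.
    by move/eqP: npq; move/eqP: npq2; lia.
    by rewrite Pzero1 ?mulr0 //; apply: hmu0; lia.
  by rewrite Pzero2 ?mulr0 // ?sla //; [lia | apply: hla0; lia].
Qed.


Arguments cc {C}. Arguments zz {C}. Arguments Pf {C}. Arguments algfacts {C beta v}. Arguments genT {C beta v}.

Lemma Bclaim (C : fieldType) (beta : C) (M N : nat) (m n : 'I_M -> nat) (v : C) :
  (1 <= M)%N -> (\sum_(k < M) m k)%N = N.+1 -> (\sum_(k < M) n k)%N = N ->
  v != 0 -> v ^- 2 != beta ->
  cc beta v ^- (M - 1) * Bel beta v m n
    = G_skew (partition_of m) (partition_of n) (zz beta v) beta.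
Proof.
move=> hM hm hn hv hb; have [hc hz _ _ _] := algfacts hv hb.
have H := genT hv hb M m n false.
rewrite /= hm hn (_ : (1 + N == 0 + N.+1)%N = true) in H; last by apply/eqP; lia.
rewrite G_P /Bel.
have -> : (0 : 'I_2) = ord0 by apply/val_inj.
have -> : (1 : 'I_2) = ord_max by apply/val_inj.
have [Mp eM] : exists Mp, M = Mp.+1 by exists M.-1; lia.
subst M; rewrite subn1 /= addn0 in H *.
have HT : monodromy beta v m n ord0 ord_max =
   cc beta v ^+ Mp * (zz beta v ^+ sumn (partition_of m) / zz beta v ^+ sumn (partition_of n)) *
   Pf beta (zz beta v) (partition_of m) (partition_of n).
  apply: (mulfI hc); rewrite H exprS; ring.
rewrite HT !mulrA mulVf ?expf_neq0 // mul1r.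
have [P0|Pn0] := eqVneq (Pf beta (zz beta v) (partition_of m) (partition_of n)) 0.
  by rewrite P0 !mulr0.
by rewrite -{1}(subnK (Psum _ _ _ _ _ Pn0)) exprD mulfK ?expf_neq0.
Qed.

Lemma trL (C : fieldType) (beta v : C) k l : (Lmat beta v k l)^T = Lmat beta v l k.
Proof.
apply/matrixP => i j; rewrite !mxE.
case: i => [[|[|i]] Hi] //; case: j => [[|[|j]] Hj] //=.
- have [->|ne] := eqVneq k l => //.
  by rewrite !mulr0.
- by rewrite eq_sym.
- by rewrite eq_sym.
- by rewrite eq_sym.
Qed.

Lemma trprod (C : fieldType) M (A : 'I_M -> 'M[C]_2) :
  (\prod_(i < M) A i)^T = \prod_(i < M) (A (rev_ord i))^T.
Proof.
elim: M A => [|M IH] A; first by rewrite !big_ord0 trmx1.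
rewrite big_ord_recl -mulmxE trmx_mul mulmxE IH big_ord_recr /=.
congr (_ * _).
  apply: eq_bigr => i _; congr (A _)^T; apply/val_inj => /=; rewrite /bump /=; have := ltn_ord i; lia.
by congr (A _)^T; apply/val_inj => /=; lia.
Qed.

Lemma Cel_Bel (C : fieldType) (beta v : C) M (n m : 'I_M -> nat) :
  Cel beta v n m = Bel beta v (fun i => m (rev_ord i)) (fun i => n (rev_ord i)).
Proof.
rewrite /Cel /Bel.
have -> : monodromy beta v n m 1 0 = (monodromy beta v n m)^T 0 1 by rewrite mxE.
rewrite /monodromy trprod.
by under eq_bigr => i _ do rewrite trL.
Qed.

Lemma partS0 M (k : 'I_M.+1 -> nat) : partition_of k =
  map S (partition_of (fun i => k (lift ord0 i))) ++ nseq (k ord0) 0%N.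
Proof.
rewrite /partition_of enum_ordSl rev_cons -cats1 map_cat flatten_cat /= cats0.
congr (_ ++ _); rewrite map_flatten -[rev (map _ _)]map_rev -!map_comp.
by congr flatten; apply: eq_map => i /=; rewrite map_nseq /bump add1n.
Qed.

Lemma dual_rev M (k : 'I_M -> nat) :
  dual_part M (partition_of k) = partition_of (fun i => k (rev_ord i)).
Proof.
elim: M k => [|M IH] k; first by rewrite !part0.
rewrite [in LHS]partS [in RHS]partS0 /dual_part rev_cat map_cat rev_nseq map_nseq.
congr (_ ++ _); last first.
  congr nseq; last by lia.
  by congr k; apply/val_inj => /=; lia.
set k' := fun j => k (widen_ord (leqnSn M) j).
rewrite (@part_ext M (fun i => k (rev_ord (lift ord0 i))) (fun i => k' (rev_ord i))); last first.
  by move=> i; rewrite /k'; congr k; apply/val_inj => /=; rewrite /bump /=; have := ltn_ord i; lia.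
rewrite -IH /dual_part -map_comp; apply/eq_in_map => x.
rewrite mem_rev => /part_bound /= h; lia.
Qed.

Lemma sum_rev M (k : 'I_M -> nat) : (\sum_(i < M) k (rev_ord i))%N = (\sum_(i < M) k i)%N.
Proof. by rewrite [RHS](reindex_inj rev_ord_inj). Qed.


Theorem mainTheorem7 (C : numClosedFieldType) (beta : C) (M N : nat)
  (m n : 'I_M -> nat) (v : C) :
  (1 <= M)%N ->
  (\sum_(k < M) m k)%N = N.+1 ->
  (\sum_(k < M) n k)%N = N ->
  v != 0 -> v ^- 2 != beta ->
  let z := (v ^- 2 - beta)^-1 in
  (v^-1 - beta * v) ^- (M - 1) * Bel beta v m n
    = G_skew (partition_of m) (partition_of n) z beta /\
  (v^-1 - beta * v) ^- (M - 1) * Cel beta v n m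
    = G_skew (dual_part M (partition_of m)) (dual_part M (partition_of n)) z beta.
Proof.
move=> hM hm hn hv hb z; split.
  exact: (Bclaim _ _ _ _ _ _ _ hM hm hn hv hb).
rewrite Cel_Bel !dual_rev.
have H := (Bclaim _ _ _ _ _ _ _ hM (etrans (sum_rev _ m) hm) (etrans (sum_rev _ n) hn) hv hb).
rewrite /z -[v^-1 - beta * v]/(cc beta v) -[(v ^- 2 - beta)^-1]/(zz beta v).
exact: H.
Qed.
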